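(* Let $A_S$ be a parabolic-retractable Artin group with Coxeter matrix $(m_{s,t})_{s,t\in S}$, and let $a,b,c\in S$ be pairwise distinct. If $m_{a,b}$ and $m_{a,c}$ are odd, then $m_{b,c}$ is also odd.
   Context: A Coxeter matrix over a finite set $S$ is a matrix $M=(m_{s,t})_{s,t\in S}$ with entries in $\mathbb{N}\cup\{\infty\}$, $m_{s,s}=1$, and $m_{s,t}=m_{t,s}\ge 2$ for $s\neq t$. Write $\Pi(s,t,m)$ for the alternating word $sts\cdots$ of length $m$. The Artin group is $A_S=\langle S\mid \Pi(s,t,m_{s,t})=\Pi(t,s,m_{s,t})$ for $s\neq t$, $m_{s,t}\neq\infty\rangle$. For $X\subseteq S$, $A_X$ is the subgroup generated by $X$. A retraction of $G$ onto a subgroup $H$ is a homomorphism $\varphi:G\to H$ with $\varphi|_H=\mathrm{id}_H$. $A_S$ is parabolic-retractable if it admits a retraction onto $A_X$ for every $X\subseteq S$. ''Odd'' means a finite odd integer ($\infty$ is not odd). *)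

(* Defs.v *)
(* Artin groups presented as words modulo the congruence
   generated by free reduction and the Artin relations (a setoid model). *)
From mathcomp Require Import all_boot.
Set Implicit Arguments. Unset Strict Implicit. Unset Printing Implicit Defensive.

(* Coxeter matrix entries: [Some k] is the finite value k, [None] is infinity. *)
Definition coxeter_matrix (S : finType) (m : S -> S -> option nat) : Prop :=
  (forall s, m s s = Some 1) /\
  (forall s t, m s t = m t s) /\
  (forall s t, s != t -> forall k, m s t = Some k -> 2 <= k).

(* A letter (s, e): s if e = false, s^-1 if e = true. *)
Definition letter (S : finType) := (S * bool)%type.
Definition word (S : finType) := seq (letter S).

Definition Pi (S : finType) (s t : S) (k : nat) : word S :=
  mkseq (fun i => (if odd i then t else s, false)) k.

Inductive artin_eq (S : finType) (m : S -> S -> option nat) : word S -> word S -> Prop :=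
| ae_refl u : artin_eq m u u
| ae_sym u v : artin_eq m u v -> artin_eq m v u
| ae_trans u v w : artin_eq m u v -> artin_eq m v w -> artin_eq m u w
| ae_ctx p q u v : artin_eq m u v -> artin_eq m (p ++ u ++ q) (p ++ v ++ q)
| ae_free s e : artin_eq m [:: (s, e); (s, ~~ e)] [::]
| ae_rel s t k : s != t -> m s t = Some k -> artin_eq m (Pi s t k) (Pi t s k).

Definition word_over (S : finType) (X : {set S}) (w : word S) : bool :=
  all (fun l => l.1 \in X) w.

(* phi (acting on representatives) is a retraction of A_S onto A_X:
   a well-defined group homomorphism A_S -> A_S with image in A_X,
   restricting to the identity on A_X. *)
Definition is_retraction (S : finType) (m : S -> S -> option nat) (X : {set S})
    (phi : word S -> word S) : Prop :=
  (forall u v, artin_eq m u v -> artin_eq m (phi u) (phi v)) /\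
  (forall u v, artin_eq m (phi (u ++ v)) (phi u ++ phi v)) /\
  (forall w, exists w', word_over X w' /\ artin_eq m (phi w) w') /\
  (forall w, word_over X w -> artin_eq m (phi w) w).

Definition parabolic_retractable (S : finType) (m : S -> S -> option nat) : Prop :=
  forall X : {set S}, exists phi : word S -> word S, is_retraction m X phi.

(* "odd": a finite odd integer; infinity is not odd *)
Definition odd_entry (k : option nat) : bool :=
  if k is Some n then odd n else false.

(* Main.v *)
Require Import Defs.
From mathcomp Require Import all_boot all_order all_algebra all_field.
From mathcomp Require Import ring.
Set Implicit Arguments. Unset Strict Implicit. Unset Printing Implicit Defensive.
Import GRing.Theory Num.Theory.
Local Open Scope ring_scope.

Lemma PiS (S : finType) (s t : S) n : Pi s t n.+1 = (s, false) :: Pi t s n.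
Proof.
rewrite /Pi /mkseq /= (iotaDl 1 0 n) -map_comp.
congr (_ :: _); apply: eq_map => i /=; by case: (odd i).
Qed.

Section Rep.
Variables (S : finType) (A : S -> S -> algC).
Notation V := {ffun S -> algC}.
Definition ev (s : S) : V := [ffun u => (u == s)%:R].
Definition fs (s : S) (v : V) : algC := \sum_u A s u * v u.
Definition sig (s : S) (v : V) : V := [ffun u => v u - fs s v * (u == s)%:R].
Definition act (w : word S) (v : V) : V := foldr (fun l x => sig l.1 x) v w.

Lemma fs_comb s (x v w : V) c1 c2 : (forall u, x u = c1 * v u + c2 * w u) ->
  fs s x = c1 * fs s v + c2 * fs s w.
Proof.
move=> H; rewrite /fs !mulr_sumr -big_split /=; apply: eq_bigr => u _; rewrite H; ring.
Qed.

Lemma fs_ev s t : fs s (ev t) = A s t.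
Proof.
rewrite /fs (bigD1 t) //= ffunE eqxx mulr1 big1 ?addr0 // => u /negbTE.
by rewrite ffunE => ->; rewrite mulr0.
Qed.

Lemma sig_lin s (x v w : V) c1 c2 : (forall u, x u = c1 * v u + c2 * w u) ->
  forall u, sig s x u = c1 * sig s v u + c2 * sig s w u.
Proof. move=> H u; rewrite !ffunE (fs_comb s H) H; ring. Qed.

Lemma act_lin W (x v w : V) c1 c2 : (forall u, x u = c1 * v u + c2 * w u) ->
  forall u, act W x u = c1 * act W v u + c2 * act W w u.
Proof. elim: W => [|l W IH] H u //=; exact: sig_lin (IH H) u. Qed.

Lemma act_scale W (x v : V) c : (forall u, x u = c * v u) ->
  forall u, act W x u = c * act W v u.
Proof.
move=> H u; rewrite (@act_lin W x v v c 0) ?mul0r ?addr0 // => u'.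
by rewrite H mul0r addr0.
Qed.

Lemma sig_fs s t (v : V) : fs s (sig t v) = fs s v - fs t v * A s t.
Proof.
rewrite (@fs_comb s _ v (ev t) 1 (- fs t v)) ?fs_ev; first ring.
by move=> u; rewrite !ffunE; ring.
Qed.

Lemma sig_invol s (v : V) : A s s = 2 -> sig s (sig s v) = v.
Proof.
move=> Hs; apply/ffunP => u; rewrite ffunE sig_fs Hs [sig s v u]ffunE; ring.
Qed.

Lemma sig_comm s t (v : V) : A s t = 0 -> A t s = 0 -> sig s (sig t v) = sig t (sig s v).
Proof.
move=> H1 H2; apply/ffunP => u; rewrite !ffunE !sig_fs H1 H2 ?ffunE; ring.
Qed.

Lemma sig_fix s (w : V) : fs s w = 0 -> sig s w = w.
Proof. by move=> H; apply/ffunP => u; rewrite ffunE H mul0r subr0. Qed.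

Lemma act_Pi_fix (w : V) n : forall s t, fs s w = 0 -> fs t w = 0 -> act (Pi s t n) w = w.
Proof.
elim: n => [|n IH] s t Hs Ht //; rewrite PiS /= IH //; exact: sig_fix.
Qed.

Lemma even_braid s t j (v : V) : A s t = 0 -> A t s = 0 ->
  act (Pi s t j.*2) v = act (Pi t s j.*2) v.
Proof.
move=> H1 H2; elim: j => [|j IH] //.
by rewrite doubleS !PiS /= IH sig_comm.
Qed.

Section Odd.
Variables (s t : S) (z : algC) (j : nat).
Hypotheses (Hss : A s s = 2) (Htt : A t t = 2) (Hst : A s t = - (z + z^-1))
  (Hts : A t s = - (z + z^-1)) (hz : z != 0) (hz2 : z * z - 1 != 0)
  (hzk : z ^+ j.*2.+1 = 1).

Let x1 : V := [ffun u => ev s u + z^-1 * ev t u].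
Let x2 : V := [ffun u => ev s u + z * ev t u].
Let r := z ^+ 2.
Let ri := z^-1 ^+ 2.

Lemma fs_x1s : fs s x1 = 1 - z^-1 ^+ 2.
Proof.
rewrite (@fs_comb s x1 (ev s) (ev t) 1 z^-1) ?fs_ev ?Hss ?Hst; first field.
all: try exact: hz.
by move=> u; rewrite ffunE mul1r.
Qed.
Lemma fs_x1t : fs t x1 = z^-1 - z.
Proof.
rewrite (@fs_comb t x1 (ev s) (ev t) 1 z^-1) ?fs_ev ?Htt ?Hts; first field.
all: try exact: hz.
by move=> u; rewrite ffunE mul1r.
Qed.
Lemma fs_x2s : fs s x2 = 1 - z ^+ 2.
Proof.
rewrite (@fs_comb s x2 (ev s) (ev t) 1 z) ?fs_ev ?Hss ?Hst; first field.
all: try exact: hz.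
by move=> u; rewrite ffunE mul1r.
Qed.
Lemma fs_x2t : fs t x2 = z - z^-1.
Proof.
rewrite (@fs_comb t x2 (ev s) (ev t) 1 z) ?fs_ev ?Htt ?Hts; first field.
all: try exact: hz.
by move=> u; rewrite ffunE mul1r.
Qed.

Lemma ss1 u : sig s x1 u = ri * x2 u.
Proof. rewrite !ffunE fs_x1s /ri ?ffunE; field; exact: hz. Qed.
Lemma ss2 u : sig s x2 u = r * x1 u.
Proof. rewrite !ffunE fs_x2s /r ?ffunE; field; exact: hz. Qed.
Lemma st1 u : sig t x1 u = x2 u.
Proof. rewrite !ffunE fs_x1t ?ffunE; field; exact: hz. Qed.
Lemma st2 u : sig t x2 u = x1 u.
Proof. rewrite !ffunE fs_x2t ?ffunE; field; exact: hz. Qed.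

Lemma sig_scale q (x v : V) c : (forall u, x u = c * v u) -> forall u, sig q x u = c * sig q v u.
Proof. exact: (@act_scale [:: (q, false)]). Qed.

Lemma L1 i u : act (Pi s t i.*2.+1) x1 u = ri ^+ i.+1 * x2 u.
Proof.
elim: i u => [|i IH] u; first by rewrite PiS /= ss1 expr1.
rewrite doubleS PiS PiS /=.
have H2 u' : sig t (act (Pi s t i.*2.+1) x1) u' = ri ^+ i.+1 * x1 u'.
  by rewrite (sig_scale t IH) st2.
by rewrite (sig_scale s H2) ss1 mulrA -exprSr.
Qed.
Lemma L2 i u : act (Pi s t i.*2.+1) x2 u = r ^+ i.+1 * x1 u.
Proof.
elim: i u => [|i IH] u; first by rewrite PiS /= ss2 expr1.
rewrite doubleS PiS PiS /=.
have H2 u' : sig t (act (Pi s t i.*2.+1) x2) u' = r ^+ i.+1 * x2 u'.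
  by rewrite (sig_scale t IH) st1.
by rewrite (sig_scale s H2) ss2 mulrA -exprSr.
Qed.
Lemma L3 i u : act (Pi t s i.*2.+1) x1 u = r ^+ i * x2 u.
Proof.
elim: i u => [|i IH] u; first by rewrite PiS /= st1 expr0 mul1r.
rewrite doubleS PiS PiS /=.
have H2 u' : sig s (act (Pi t s i.*2.+1) x1) u' = r ^+ i.+1 * x1 u'.
  by rewrite (sig_scale s IH) ss2 mulrA -exprSr.
by rewrite (sig_scale t H2) st1.
Qed.
Lemma L4 i u : act (Pi t s i.*2.+1) x2 u = ri ^+ i * x1 u.
Proof.
elim: i u => [|i IH] u; first by rewrite PiS /= st2 expr0 mul1r.
rewrite doubleS PiS PiS /=.
have H2 u' : sig s (act (Pi t s i.*2.+1) x2) u' = ri ^+ i.+1 * x2 u'.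
  by rewrite (sig_scale s IH) ss1 mulrA -exprSr.
by rewrite (sig_scale t H2) st2.
Qed.

Lemma pow1 : ri ^+ j.+1 = r ^+ j.
Proof.
have hr : r ^+ j.+1 != 0 by rewrite expf_neq0 // expf_neq0.
apply: (mulIf hr).
have E1 : ri ^+ j.+1 * r ^+ j.+1 = 1.
  by rewrite -exprMn /ri /r -exprMn mulVf // !expr1n.
have E2 : r ^+ j * r ^+ j.+1 = 1.
  by rewrite -exprD addnS addnn /r -exprM mulnC exprM hzk !expr1n.
by rewrite E1 E2.
Qed.
Lemma pow2 : r ^+ j.+1 = ri ^+ j.
Proof.
have hr : r ^+ j != 0 by rewrite expf_neq0 // expf_neq0.
apply: (mulIf hr).
have E1 : ri ^+ j * r ^+ j = 1.
  by rewrite -exprMn /ri /r -exprMn mulVf // !expr1n.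
have E2 : r ^+ j.+1 * r ^+ j = 1.
  by rewrite -exprD addSn addnn /r -exprM mulnC exprM hzk !expr1n.
by rewrite E1 E2.
Qed.

Lemma odd_braid (v : V) : act (Pi s t j.*2.+1) v = act (Pi t s j.*2.+1) v.
Proof.
pose p := fs s v; pose q := fs t v; pose d := z - z^-1.
pose m1 := - ((p + z * q) / d ^+ 2); pose m2 := - ((p + z^-1 * q) / d ^+ 2).
pose y : V := [ffun u => m1 * x1 u + m2 * x2 u].
pose w : V := [ffun u => v u - y u].
have hv u : v u = 1 * w u + 1 * y u by rewrite ffunE; ring.
have hy u : y u = m1 * x1 u + m2 * x2 u by rewrite ffunE.
have hws : fs s w = 0.
  rewrite (@fs_comb s w v y 1 (-1)); last by move=> u; rewrite ffunE; ring.
  rewrite (fs_comb s hy) fs_x1s fs_x2s /m1 /m2 /d /p; field.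
  by rewrite hz hz2.
have hwt : fs t w = 0.
  rewrite (@fs_comb t w v y 1 (-1)); last by move=> u; rewrite ffunE; ring.
  rewrite (fs_comb t hy) fs_x1t fs_x2t /m1 /m2 /d /q; field.
  by rewrite hz hz2.
apply/ffunP => u.
rewrite (act_lin _ hv) (act_lin _ hv) (@act_Pi_fix w _ s t hws hwt) (@act_Pi_fix w _ t s hwt hws).
rewrite (act_lin _ hy) (act_lin _ hy) L1 L2 L3 L4 pow1 pow2; ring.
Qed.
End Odd.

End Rep.

Fixpoint alt (T : Type) (F G : T -> T) n v := if n is n'.+1 then F (alt G F n' v) else v.

Lemma alt_ext (T : Type) n : forall (F G F' G' : T -> T), (forall v, F v = F' v) -> (forall v, G v = G' v) ->
  forall v, alt F G n v = alt F' G' n v.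
Proof. elim: n => [|n IH] F G F' G' HF HG v //=; by rewrite HF (IH G F G' F'). Qed.

Lemma iter_comm (T : Type) (F G : T -> T) : (forall v, F (G v) = G (F v)) ->
  forall j v, G (iter j F v) = iter j F (G v).
Proof. move=> H; elim=> [|j IH] v //=; by rewrite -IH H. Qed.

Lemma eqFG (T : Type) (F G Fi : T -> T) j :
  (forall v, F (G v) = G (F v)) -> (forall v, G (G v) = v) -> (forall v, F (Fi v) = v) ->
  (forall v, alt F G j.*2.+1 v = alt G F j.*2.+1 v) -> forall v, F v = G v.
Proof.
move=> HC HG HFi Halt.
have HC' : forall v, G (F v) = F (G v) by move=> v; rewrite HC.
have E1 : forall (P Q : T -> T), (forall v, P (Q v) = Q (P v)) ->
   forall i v, alt P Q i.*2 v = iter i P (iter i Q v).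
  move=> P Q HPQ; elim=> [|i IH] v //.
  rewrite doubleS /= IH -(iter_comm (F:=P) (G:=Q)) //.
have E2 : forall k i v, iter k G (iter i F v) = iter i F (iter k G v).
  by elim=> [|k IH] i v //=; rewrite IH iter_comm.
move=> x.
pose v := iter j G (iter j Fi x).
have hx : iter j F (iter j G v) = x.
  have GG : forall i y, iter i G (iter i G y) = y.
    by elim=> [|i IH] y //; rewrite iterSr iterS HG IH.
  have FF : forall i y, iter i F (iter i Fi y) = y.
    by elim=> [|i IH] y //; rewrite iterSr iterS HFi IH.
  by rewrite /v GG FF.
by have := Halt v; rewrite /= E1 // E1 // E2 hx.
Qed.

Lemma act_inv (S : finType) (m : S -> S -> option nat) (A : S -> S -> algC)
  (HA : forall s, A s s = 2)
  (Hbr : forall s t k, s != t -> m s t = Some k -> forall v, act A (Pi s t k) v = act A (Pi t s k) v)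
  u w : artin_eq m u w -> forall v, act A u v = act A w v.
Proof.
move=> H; elim: H.
- by [].
- by move=> u' v' _ IH v; rewrite IH.
- by move=> u' v' w' _ IH1 _ IH2 v; rewrite IH1 IH2.
- move=> p q u' v' _ IH x; rewrite /act !foldr_cat; congr (foldr _ _ p); exact: IH.
- by move=> s e v /=; rewrite sig_invol.
- by move=> s t k hst E v; apply: Hbr.
Qed.

Definition zeta (k : nat) : algC :=
  match k with 0 => 1 | k'.+1 => sval (C_prim_root_exists (ltn0Sn k')) end.

Lemma zetaP k : (0 < k)%N -> k.-primitive_root (zeta k).
Proof. by case: k => // k _ /=; case: (C_prim_root_exists _). Qed.

Definition Acox (S : finType) (m : S -> S -> option nat) (s t : S) : algC :=
  if s == t then 2 else
  match m s t with Some k => if odd k then - (zeta k + (zeta k)^-1) else 0 | None => 0 end.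

Lemma braid_cox (S : finType) (m : S -> S -> option nat) : coxeter_matrix m ->
  forall s t k, s != t -> m s t = Some k ->
  forall v, act (Acox m) (Pi s t k) v = act (Acox m) (Pi t s k) v.
Proof.
move=> [h1 [h2 h3]] s t k hst E v.
have Ets : m t s = Some k by rewrite h2.
have hts : t != s by rewrite eq_sym.
have k2 := h3 _ _ hst _ E.
case ok: (odd k).
- have [j hk] : exists j, k = j.*2.+1.
    by exists k./2; rewrite -{1}(odd_double_half k) ok add1n.
  have zP := zetaP (ltn_trans (ltn0Sn 0) k2).
  set z := zeta k in zP.
  have zk : z ^+ k = 1 := prim_expr_order zP.
  have z1 : z != 1.
    apply/negP => /eqP z1; have := prim_order_dvd zP 1; rewrite expr1 z1 eqxx dvdn1.
    by move=> /eqP ek; rewrite ek in k2.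
  have hz : z != 0.
    by apply/eqP => z0; move: zk; rewrite z0 expr0n hk /= => /eqP; rewrite eq_sym oner_eq0.
  have hz2 : z * z - 1 != 0.
    apply/negP => /eqP zz; apply/negP: z1; apply/negPn/eqP.
    have zz' : z * z = 1 by apply/eqP; rewrite -subr_eq0; apply/eqP.
    by rewrite -zk hk exprS -mul2n exprM expr2 zz' expr1n mulr1.
  rewrite hk; apply: (@odd_braid _ _ s t z j) => //.
  + by rewrite /Acox eqxx.
  + by rewrite /Acox eqxx.
  + by rewrite /Acox (negbTE hst) E ok.
  + by rewrite /Acox (negbTE hts) Ets ok.
  + by rewrite -hk.
- have [j hk] : exists j, k = j.*2.
    by exists k./2; rewrite -{1}(odd_double_half k) ok add0n.
  rewrite hk; apply: even_braid.
  + by rewrite /Acox (negbTE hst) E ok.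
  + by rewrite /Acox (negbTE hts) Ets ok.
Qed.

Lemma act_comm_over (S : finType) (A : S -> S -> algC) (X : {set S}) q w v :
  (forall x, x \in X -> forall v, sig A x (sig A q v) = sig A q (sig A x v)) ->
  word_over X w -> act A w (sig A q v) = sig A q (act A w v).
Proof.
move=> H; elim: w => [|l w IH] //=; rewrite /word_over /= => /andP [hl hw].
by rewrite IH // H.
Qed.



Theorem lemma3p2 (S : finType) (m : S -> S -> option nat)
  (hm : coxeter_matrix m) (hr : parabolic_retractable m)
  (a b c : S) (hab : a != b) (hac : a != c) (hbc : b != c) :
  odd_entry (m a b) -> odd_entry (m a c) -> odd_entry (m b c).
Proof.
move=> oab oac.
case Hbc: (odd_entry (m b c)) => //.
have hm' := hm; case: hm' => [h1 [h2 h3]].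
pose A := Acox m.
have HA s : A s s = 2%:R by rewrite /A /Acox eqxx.
have Ainv := act_inv HA (braid_cox hm).
have Abc : A b c = 0%R.
  rewrite /A /Acox (negbTE hbc); move: Hbc; rewrite /odd_entry.
  by case: (m b c) => [k|] //= ->.
have Acb : A c b = 0%R.
  rewrite /A /Acox eq_sym (negbTE hbc) h2; move: Hbc; rewrite /odd_entry.
  by case: (m b c) => [k|] //= ->.
have [phi [H1 [H2 [H3 H4]]]] := hr [set b; c].
set X := [set b; c] in H3 H4.
have T0 w v : word_over X w -> act A (phi w) v = act A w v.
  by move=> hw; exact: Ainv (H4 w hw) v.
have Tcat u w v : act A (phi (u ++ w)) v = act A (phi u) (act A (phi w) v).
  by rewrite (Ainv _ _ (H2 u w)) /act foldr_cat.
have Talt n : forall x y v, act A (phi (Pi x y n)) v =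
    alt (act A (phi [:: (x, false)])) (act A (phi [:: (y, false)])) n v.
  elim: n => [|n IH] x y v; first by rewrite T0.
  by rewrite PiS -cat1s Tcat IH.
pose F := act A (phi [:: (a, false)]).
pose Fi := act A (phi [:: (a, true)]).
have hFFi v : F (Fi v) = v.
  rewrite /F /Fi -Tcat.
  rewrite (Ainv _ (phi [::]) (H1 [:: (a, false); (a, true)] [::] (ae_free m a false))).
  by rewrite T0.
have [wa [hwa Ea]] := H3 [:: (a, false)].
have hF v : F v = act A wa v by exact: Ainv _ _ Ea v.
have hX x : x \in X -> x = b \/ x = c.
  by rewrite /X !inE => /orP [] /eqP ->; [left|right].
have Gq q (hq : q \in X) v : act A (phi [:: (q, false)]) v = sig A q v.
  by rewrite T0 // /word_over /= hq.
have commq q (hq : q \in X) v : F (sig A q v) = sig A q (F v).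
  rewrite !hF; apply: act_comm_over hwa => x hx v'.
  case: (hX _ hx) => ->; case: (hX _ hq) => -> //; exact: sig_comm.
have eqq q k (hq : q \in X) (E : m a q = Some k) (ok : odd k) (haq : a != q) v :
    F v = sig A q v.
  have [j hk] : exists j, k = j.*2.+1.
    by exists k./2; rewrite -{1}(odd_double_half k) ok add1n.
  apply: (@eqFG _ F (sig A q) Fi j) => //.
  - by move=> v'; exact: commq.
  - by move=> v'; rewrite sig_invol.
  - move=> v'; have := Ainv _ _ (H1 _ _ (ae_rel haq E)) v'.
    rewrite !Talt => e; rewrite hk in e.
    transitivity (alt F (act A (phi [:: (q, false)])) j.*2.+1 v').
      by apply: alt_ext => // x; rewrite Gq.
    rewrite e; apply: alt_ext => // x; exact: Gq.
have hbX : b \in X by rewrite /X !inE eqxx.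
have hcX : c \in X by rewrite /X !inE eqxx orbT.
have Fb : forall v, F v = sig A b v.
  move: oab; rewrite /odd_entry; case E: (m a b) => [k|] // ok.
  exact: (eqq b k).
have Fc : forall v, F v = sig A c v.
  move: oac; rewrite /odd_entry; case E: (m a c) => [k|] // ok.
  exact: (eqq c k).
have := congr1 (fun f : {ffun S -> algC} => f b) (etrans (esym (Fb (ev b))) (Fc (ev b))).
rewrite /= !ffunE !fs_ev HA Acb ?ffunE eqxx (negbTE hbc) => e.
have h2' : (2%:R : algC) = 0%R.
  transitivity ((1 - 0 * 0%:R) - (1 - 2%:R * 1%:R) : algC)%R; first by ring.
  by rewrite -e subrr.
by move/eqP: h2'; rewrite pnatr_eq0.
Qed.
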